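(* Let $X$ be sampled uniformly at random from $\{0,1,2,3\}^n$. Then $\Pr[X \text{ is regular}]\ge 7/8$.
   Context: Logarithms are base $2$. Define $w(0)=0$, $w(1)=1$, $w(2)=2\log n+11$, $w(3)=2\log n+12$. A string $x\in\{0,1,2,3\}^n$ is regular if for every symbol $a\in\{0,1,2,3\}$ and all $1\le j\le k\le n$ such that some $i\in[j,k]$ has $x_i\ne a$, it holds that $\sum_{i=j}^k (w(x_i)-w(a))\neq 0$. *)

(* Defs.v *)
From Stdlib Require Import Reals.
From HB Require Import structures.
From mathcomp Require Import all_boot all_order all_algebra.
From mathcomp Require Import Rstruct.
Set Implicit Arguments. Unset Strict Implicit. Unset Printing Implicit Defensive.
Import Order.TTheory GRing.Theory Num.Theory.
Local Open Scope ring_scope.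

Definition log2n (n : nat) : R := (ln (n%:R) / ln 2)%R.

Definition w (n : nat) (a : 'I_4) : R :=
  match nat_of_ord a with
  | 0 => 0
  | 1 => 1
  | 2 => 2 * log2n n + 11
  | _ => 2 * log2n n + 12
  end.

(* x in {0,1,2,3}^n (positions 0..n-1 instead of 1..n) is regular *)
Definition regular (n : nat) (x : {ffun 'I_n -> 'I_4}) : bool :=
  [forall a : 'I_4, forall j : 'I_n, forall k : 'I_n,
     ((j <= k)%N && [exists i : 'I_n, ((j <= i <= k)%N) && (x i != a)]) ==>
     ((\sum_(i : 'I_n | (j <= i <= k)%N) (w n (x i) - w n a)) != 0)].

Definition prob_regular (n : nat) : R :=
  (#|[set x : {ffun 'I_n -> 'I_4} | regular x]|%:R / #|{ffun 'I_n -> 'I_4}|%:R).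

(* Main.v *)
Require Import Defs.
From Stdlib Require Import Reals Lra.
From HB Require Import structures.
From mathcomp Require Import all_boot all_order all_algebra.
From mathcomp Require Import Rstruct.
Set Implicit Arguments. Unset Strict Implicit. Unset Printing Implicit Defensive.
Import Order.TTheory GRing.Theory Num.Theory.

Local Open Scope R_scope.
Lemma N1 (b : R) : 0 <= b <= 17/25 -> 16 * b^11 <= 1 - b.
Proof.
move=> hb; have : b^11 <= (17/25)^11 by apply: pow_incr; lra.
lra.
Qed.

Lemma N2 (b : R) (e : nat) : 0 <= b <= 33/50 ->
  16 * (2 * (2 * 2^e)) * (b^13 * (b^2)^e) <= 1 - b.
Proof.
move=> hb.
have h1 : b^13 <= (33/50)^13 by apply: pow_incr; lra.
have h2 : (b^2)^e <= ((33/50)^2)^e by apply: pow_incr; split; [apply: pow_le; lra | apply: pow_incr; lra].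
have h0 : 0 <= (b^2)^e by apply: pow_le; apply: pow_le; lra.
have h0' : 0 <= (33/50)^13 by apply: pow_le; lra.
have h3 : b^13 * (b^2)^e <= (33/50)^13 * ((33/50)^2)^e.
  apply: Rmult_le_compat => //; apply: pow_le; lra.
have h4 : 2^e * ((33/50)^2)^e <= 1.
  rewrite -Rpow_mult_distr -(pow1 e); apply: pow_incr; lra.
have h5 : 0 <= 2^e by apply: pow_le; lra.
have h6 : 2^e * (b^13 * (b^2)^e) <= (33/50)^13 * (2^e * ((33/50)^2)^e) by nra.
have h7 : (33/50)^13 * (2^e * ((33/50)^2)^e) <= (33/50)^13 by nra.
have h8 : 64 * (33/50)^13 <= 1 - 33/50 by lra.
lra.
Qed.

Definition betS (p : nat) : R := (5/4 + 5/4 * / (5/4)^p) * / 2.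
Lemma betS11 : betS 11 <= 17/25. Proof. rewrite /betS; lra. Qed.
Lemma betS13 : betS 13 <= 33/50. Proof. rewrite /betS; lra. Qed.

Lemma INR_exp2 e : INR (2 ^ e)%N = 2 ^ e.
Proof.
elim: e => [|e IH]; first by [].
rewrite expnS mult_INR IH /=; lra.
Qed.

Lemma log_geS n : (0 < n)%N -> INR (trunc_log 2 n) <= ln (INR n) / ln 2.
Proof.
move=> n0.
have he := trunc_logP (isT : (1 < 2)%N) n0.
have ln2 : 0 < ln 2 by have := ln_lt_2; lra.
apply: (Rmult_le_reg_r (ln 2)) => //.
rewrite /Rdiv Rmult_assoc Rinv_l ?Rmult_1_r; last lra.
rewrite -ln_pow; last lra.
have h : 2 ^ trunc_log 2 n <= INR n.
  rewrite -INR_exp2; apply: le_INR; exact: (ssrnat.leP he).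
case: (Rle_lt_or_eq_dec _ _ h) => h'.
  apply: Rlt_le; apply: ln_increasing => //; apply: pow_lt; lra.
by rewrite h'; apply: Rle_refl.
Qed.

Lemma betS_ge0 p : 0 <= betS p.
Proof.
rewrite /betS; apply: Rmult_le_pos; last lra.
apply: Rplus_le_le_0_compat; first lra.
apply: Rmult_le_pos; first lra.
apply: Rlt_le; apply: Rinv_0_lt_compat; apply: pow_lt; lra.
Qed.

Lemma N1S : 16 * (betS 11)^11 <= 1 - betS 11 /\ betS 11 < 1.
Proof.
have := betS11; have := betS_ge0 11 => h0 h1.
split; last lra.
apply: N1; lra.
Qed.

Lemma N2S e b : 0 <= b -> b <= betS 13 ->
  16 * (2 * (2 * 2^e)) * (b^13 * (b^2)^e) <= 1 - b /\ b < 1.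
Proof.
have := betS13 => h1 h0 h2.
split; last lra.
apply: N2; lra.
Qed.

Lemma hn2S n e : (n < 2 ^ e.+2)%N -> INR n <= 2 * (2 * 2 ^ e).
Proof.
move=> h.
have -> : 2 * (2 * 2 ^ e) = 2 ^ e.+2 by rewrite /=; ring.
rewrite -INR_exp2; apply: le_INR; apply: ssrnat.leP; exact: ltnW.
Qed.

From mathcomp Require Import lra zify.
Local Open Scope ring_scope.
Definition cnt n (g : 'I_4 -> bool) (j k : 'I_n) (x : {ffun 'I_n -> 'I_4}) : nat :=
  (\sum_(i : 'I_n | (j <= i <= k)%N) (g (x i) : nat))%N.
Definition mlen n (j k : 'I_n) : nat := #|[pred i : 'I_n | (j <= i <= k)%N]|.
Definition Ev n p (g : 'I_4 -> bool) (j k : 'I_n) x : bool :=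
  (0 < cnt g j k x)%N && (p * cnt g j k x <= mlen j k)%N.

Lemma cnt_le_mlen n (h : 'I_4 -> bool) (j k : 'I_n) x : (cnt h j k x <= mlen j k)%N.
Proof.
rewrite /cnt /mlen -sum1_card; apply: leq_sum => i _; by case: (h _).
Qed.

Lemma core n p (g h : 'I_4 -> bool) (L : R) (j k : 'I_n) x :
  p%:R <= L -> L * (cnt g j k x)%:R = (cnt h j k x)%:R ->
  (exists i : 'I_n, (j <= i <= k)%N && (g (x i) || h (x i))) -> Ev p g j k x.
Proof.
move=> hpL hL [i /andP [hi hgh]].
have Gpos : (0 < cnt g j k x)%N.
  rewrite lt0n; apply/negP => /eqP G0.
  move: hL; rewrite G0 mulr0 => /esym/eqP; rewrite pnatr_eq0 => H0.
  move: G0 => /eqP G0.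
  rewrite /cnt sum_nat_eq0 in G0; rewrite /cnt sum_nat_eq0 in H0.
  have := forallP G0 i; have := forallP H0 i.
  rewrite hi /= => /eqP H0' /eqP G0'.
  by move: hgh; case: (g _) G0'; case: (h _) H0'.
rewrite /Ev Gpos /=.
apply: leq_trans (cnt_le_mlen h j k x).
rewrite -(ler_nat R) -hL natrM.
apply: ler_wpM2r => //.
Qed.

Definition LL n := 2%:R * log2n n + (11%:R : R).
Definition g1 (y : 'I_4) : bool := (2 <= y)%N.
Definition g2 (y : 'I_4) : bool := (y <= 1)%N.
Definition h1 (y : 'I_4) : bool := ~~ odd y.
Definition h2 (y : 'I_4) : bool := odd y.

Lemma Z2 : IZR 2 = 2%:R :> R. Proof. by rewrite IZRposE INRE. Qed.
Lemma Z11 : IZR 11 = 11%:R :> R. Proof. by rewrite IZRposE INRE. Qed.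
Lemma Z12 : IZR 12 = GRing.add (11%:R : R) 1. Proof. by rewrite IZRposE INRE natr1. Qed.

Lemma wE n (y : 'I_4) : w n y =
  match val y with 0 => 0 | 1 => 1 | 2 => LL n | _ => LL n + 1 end.
Proof.
case: y => [[|[|[|[|?]]]] hy] //; rewrite /w /= ?R0E ?R1E //.
  by rewrite /LL RplusE RmultE Z2 Z11.
by rewrite /LL RplusE RmultE Z2 Z12 addrA.
Qed.

Lemma viol n p x : p%:R <= LL n -> 0 <= log2n n -> ~~ regular x ->
  exists j k : 'I_n, Ev p g1 j k x || Ev p g2 j k x.
Proof.
move=> hp hl /forallPn [a /forallPn [j /forallPn [k]]].
rewrite negb_imply negbK => /andP [/andP [hjk /existsP [i /andP [hi hxi]]] /eqP S0].
exists j, k.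
have L11 : 11%:R <= LL n by rewrite /LL; lra.
case: a hxi S0 => [[|[|[|[|?]]]] ha] // hxi S0.
- exfalso.
  have T : forall i0 : 'I_n, (j <= i0 <= k)%N -> 0 <= w n (x i0) - w n (Ordinal ha).
    move=> i0 _; rewrite !wE /=; case: (x i0) => [[|[|[|[|?]]]] ?] // /=; lra.
  have := psumr_eq0P T S0 hi.
  move: hxi; rewrite !wE /=; case: (x i) => [[|[|[|[|?]]]] ?] // //= _; lra.
- apply/orP; left.
  apply: (@core n p g1 h1 (LL n)) => //.
    have E : forall i0 : 'I_n, (j <= i0 <= k)%N ->
      w n (x i0) - w n (Ordinal ha) = LL n * (g1 (x i0))%:R - (h1 (x i0))%:R.
      move=> i0 _; rewrite !wE /g1 /h1 /=; case: (x i0) => [[|[|[|[|?]]]] ?] // /=; lra.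
    rewrite (eq_bigr _ E) sumrB -mulr_sumr in S0.
    rewrite /cnt !natr_sum; lra.
  exists i; rewrite hi /=.
  by move: hxi; rewrite /g1 /h1; case: (x i) => [[|[|[|[|?]]]] ?] //.
- apply/orP; right.
  apply: (@core n p g2 h2 (LL n)) => //.
    have E : forall i0 : 'I_n, (j <= i0 <= k)%N ->
      w n (x i0) - w n (Ordinal ha) = (h2 (x i0))%:R - LL n * (g2 (x i0))%:R.
      move=> i0 _; rewrite !wE /g2 /h2 /=; case: (x i0) => [[|[|[|[|?]]]] ?] // /=; lra.
    rewrite (eq_bigr _ E) sumrB -mulr_sumr in S0.
    rewrite /cnt !natr_sum; lra.
  exists i; rewrite hi /=.
  by move: hxi; rewrite /g2 /h2; case: (x i) => [[|[|[|[|?]]]] ?] //.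
- exfalso.
  have T : forall i0 : 'I_n, (j <= i0 <= k)%N -> 0 <= w n (Ordinal ha) - w n (x i0).
    move=> i0 _; rewrite !wE /=; case: (x i0) => [[|[|[|[|?]]]] ?] // /=; lra.
  have S1 : \sum_(i0 : 'I_n | (j <= i0 <= k)%N) (w n (Ordinal ha) - w n (x i0)) = 0.
    by rewrite -(opprK (\sum_(i0 | _) _)) -sumrN; under eq_bigr do rewrite opprB; rewrite S0 oppr0.
  have := psumr_eq0P T S1 hi.
  move: hxi; rewrite !wE /=; case: (x i) => [[|[|[|[|?]]]] ?] // //= _; lra.
Qed.

Definition vv := 5%:R / (4%:R : R).
Definition bet p := (vv + vv / vv ^+ p) / 2%:R.

Lemma vv_ge1 : 1 <= vv.
Proof. by rewrite /vv ler_pdivlMr ?ltr0n // mul1r ler_nat. Qed.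
Lemma vv_gt0 : 0 < vv.
Proof. by apply: lt_le_trans vv_ge1. Qed.

Lemma chernoff n p (g : 'I_4 -> bool) (j k : 'I_n)
  (hg : forall u v : R, \sum_(y : 'I_4) (if g y then u else v) = u *+ 2 + v *+ 2) :
  (0 < p)%N ->
  \sum_(x : {ffun 'I_n -> 'I_4}) ((nat_of_bool (Ev p g j k x))%:R : R) <=
  (if (p <= mlen j k)%N then 4%:R ^+ n * bet p ^+ mlen j k else 0).
Proof.
move=> hp; case: ifP => hpm; last first.
  rewrite big1 // => x _; case E: (Ev p g j k x) => //.
  exfalso; move/andP: E => [G0 pG].
  by move: hpm; rewrite (leq_trans (leq_pmulr p G0) pG).
pose F := fun (i : 'I_n) (y : 'I_4) =>
  if (j <= i <= k)%N then (if g y then vv / vv ^+ p else vv) else 1.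
have Fge0 : forall i y, 0 <= F i y.
  move=> i y; rewrite /F; case: ifP => _; last exact: ler01.
  have := vv_gt0 => v0.
  by case: (g y); [apply: divr_ge0; [apply: ltW | apply: exprn_ge0; apply: ltW] | apply: ltW].
apply: (@le_trans _ _ (\sum_(x : {ffun 'I_n -> 'I_4}) \prod_i F i (x i))).
  apply: ler_sum => x _.
  case E: (Ev p g j k x); last by rewrite /=; apply: prodr_ge0 => i _; exact: Fge0.
  move/andP: E => [G0 pG].
  rewrite /F -big_mkcond /=.
  rewrite (eq_bigr (fun i => vv * ((vv ^+ p)^-1) ^+ (nat_of_bool (g (x i))))); last first.
    by move=> i _; case: (g (x i)); rewrite ?expr1 ?expr0 ?mulr1.
  rewrite big_split /= prodr_const prodrXr -/(cnt g j k x) -/(mlen j k).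
  rewrite exprVn -exprM ler_pdivlMr ?exprn_gt0 ?vv_gt0 // mul1r.
  exact: (ler_weXn2l vv_ge1 pG).
rewrite -bigA_distr_bigA /=.
rewrite (eq_bigr (fun i : 'I_n => 4%:R * (if (j <= i <= k)%N then bet p else 1))); last first.
  move=> i _; rewrite /F; case: ifP => _.
    rewrite hg /bet; lra.
  by rewrite sumr_const card_ord mulr1.
rewrite big_split /= prodr_const card_ord -big_mkcond /= prodr_const.
by [].
Qed.

Lemma mlenE n (j k : 'I_n) : mlen j k = (k.+1 - j)%N.
Proof.
rewrite /mlen -sum1_card.
rewrite (eq_bigl (fun i : 'I_n => (j <= i) && (i < k.+1))%N); last first.
  by move=> i; rewrite inE ltnS.
rewrite -(big_mkord (fun i => (j <= i) && (i < k.+1))%N (fun _ => 1%N)).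
rewrite -big_nat_widen; last exact: ltn_ord.
rewrite (eq_bigl (fun i => true && (j <= i)%N)) // -big_nat_widenl //.
by rewrite sum_nat_const_nat muln1.
Qed.

Lemma geom (b : R) p j N : (0 < p)%N ->
  (1 - b) * \sum_(0 <= t < N) (if (p <= t.+1 - j)%N then b ^+ (t.+1 - j) else 0)
  + b ^+ (maxn p (N.+1 - j)) = b ^+ p.
Proof.
move=> hp; elim: N => [|N IH].
  by rewrite big_geq // mulr0 add0r (maxn_idPl _) //; apply: leq_trans hp; rewrite leq_subr.
rewrite big_nat_recr //=.
case: (leqP p (N.+1 - j)) => h.
  have e1 : maxn p (N.+1 - j) = (N.+1 - j)%N by lia.
  have e2 : maxn p (N.+2 - j) = (N.+1 - j).+1%N by lia.
  rewrite e2 exprS -IH e1.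
  set S := \sum_(0 <= t < N) _; set B := b ^+ (N.+1 - j).
  rewrite mulrDr -addrA; congr (_ + _).
  rewrite mulrBl mul1r; lra.
have e2 : maxn p (N.+2 - j) = p by lia.
have e1 : maxn p (N.+1 - j) = p by lia.
by rewrite e2 -[in RHS]IH e1 addr0.
Qed.

Lemma sum_k n p (b : R) (j : 'I_n) : 0 <= b -> b < 1 -> (0 < p)%N ->
  \sum_(k : 'I_n) (if (p <= mlen j k)%N then b ^+ mlen j k else 0) <= b ^+ p / (1 - b).
Proof.
move=> b0 b1 hp.
rewrite (eq_bigr (fun k : 'I_n => if (p <= k.+1 - j)%N then b ^+ (k.+1 - j) else 0)); last first.
  by move=> k _; rewrite mlenE.
rewrite -(big_mkord xpredT (fun k => if (p <= k.+1 - j)%N then b ^+ (k.+1 - j) else 0)).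
have := geom b j n hp.
set S := \sum_(0 <= t < n) _; set M := b ^+ (maxn p (n.+1 - j)).
have M0 : 0 <= M by apply: exprn_ge0.
move=> E.
rewrite ler_pdivlMr; last by lra.
rewrite mulrC; lra.
Qed.

Lemma hg1 (u v : R) : \sum_(y : 'I_4) (if g1 y then u else v) = u *+ 2 + v *+ 2.
Proof. rewrite !big_ord_recl big_ord0 /g1 /=. rewrite /bump /=. lra. Qed.
Lemma hg2 (u v : R) : \sum_(y : 'I_4) (if g2 y then u else v) = u *+ 2 + v *+ 2.
Proof. rewrite !big_ord_recl big_ord0 /g2 /=. rewrite /bump /=. lra. Qed.

Lemma bet_ge0 p : 0 <= bet p.
Proof.
rewrite /bet; apply: divr_ge0 => //; apply: addr_ge0; first exact: ltW vv_gt0.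
by apply: divr_ge0; [exact: ltW vv_gt0 | apply: exprn_ge0; exact: ltW vv_gt0].
Qed.

Lemma nbad_bound n p : (0 < p)%N -> bet p < 1 -> p%:R <= LL n -> 0 <= log2n n ->
  \sum_(x : {ffun 'I_n -> 'I_4}) ((nat_of_bool (~~ regular x))%:R : R)
  <= 2%:R * n%:R * 4%:R ^+ n * (bet p ^+ p / (1 - bet p)).
Proof.
move=> hp hb1 hpL hl.
pose f := fun (x : {ffun 'I_n -> 'I_4}) (j k : 'I_n) =>
  ((nat_of_bool (Ev p g1 j k x))%:R : R) + (nat_of_bool (Ev p g2 j k x))%:R.
have f0 : forall x j k, 0 <= f x j k by move=> x j k; rewrite /f; apply: addr_ge0.
apply: (@le_trans _ _ (\sum_(x : {ffun 'I_n -> 'I_4}) \sum_(j : 'I_n) \sum_(k : 'I_n) f x j k)).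
  apply: ler_sum => x _.
  case R: (regular x).
    by rewrite /=; apply: sumr_ge0 => j _; apply: sumr_ge0 => k _.
  have [j [k hjk]] := viol hpL hl (negbT R).
  rewrite (bigD1 j) //= (bigD1 k) //=.
  have h1 : 1 <= f x j k.
    by rewrite /f; move: hjk; case: (Ev p g1 j k x); case: (Ev p g2 j k x) => //= _; lra.
  have h2 : 0 <= \sum_(i | i != k) f x j i by apply: sumr_ge0.
  have h3 : 0 <= \sum_(i | i != j) \sum_(k0 : 'I_n) f x i k0.
    by apply: sumr_ge0 => i _; apply: sumr_ge0.
  lra.
rewrite exchange_big /=.
under eq_bigr do rewrite exchange_big /=.
have C : forall j k : 'I_n, \sum_(x : {ffun 'I_n -> 'I_4}) f x j k <=
    2%:R * (4%:R ^+ n * (if (p <= mlen j k)%N then bet p ^+ mlen j k else 0)).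
  move=> j k; rewrite /f big_split /=.
  have c1 := chernoff j k hg1 hp; have c2 := chernoff j k hg2 hp.
  have E : (if (p <= mlen j k)%N then 4%:R ^+ n * bet p ^+ mlen j k else 0) =
    4%:R ^+ n * (if (p <= mlen j k)%N then bet p ^+ mlen j k else 0).
    by case: ifP; rewrite ?mulr0.
  rewrite E in c1 c2.
  by apply: le_trans (lerD c1 c2) _; rewrite mulr_natl mulr2n.
apply: (@le_trans _ _ (\sum_(j : 'I_n) \sum_(k : 'I_n)
    2%:R * (4%:R ^+ n * (if (p <= mlen j k)%N then bet p ^+ mlen j k else 0)))).
  by apply: ler_sum => j _; apply: ler_sum => k _; apply: C.
apply: (@le_trans _ _ (\sum_(j : 'I_n) 2%:R * (4%:R ^+ n * (bet p ^+ p / (1 - bet p))))).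
  apply: ler_sum => j _.
  rewrite -mulr_sumr -mulr_sumr.
  apply: ler_wpM2l => //; apply: ler_wpM2l; first exact: exprn_ge0.
  exact: sum_k (bet_ge0 p) hb1 hp.
rewrite sumr_const card_ord -mulr_natl.
lra.
Qed.
Lemma expE (x : R) m : x ^+ m = pow x m.
Proof. elim: m => [|m IH]; first by rewrite expr0. by rewrite exprS IH. Qed.

Lemma Z4 : IZR 4 = 4%:R :> R. Proof. by rewrite IZRposE INRE. Qed.
Lemma Z5 : IZR 5 = 5%:R :> R. Proof. by rewrite IZRposE INRE. Qed.
Lemma Z16 : IZR 16 = 16%:R :> R. Proof. by rewrite IZRposE INRE. Qed.

Lemma betE p : bet p = betS p.
Proof. by rewrite /bet /vv /betS expE -Z5 -Z4 -Z2. Qed.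

Lemma bet_mono p q : (q <= p)%N -> bet p <= bet q.
Proof.
move=> hqp; rewrite /bet ler_pM2r ?invr_gt0 ?ltr0n // lerD2l ler_pM2l ?vv_gt0 //.
rewrite lef_pV2 ?posrE ?exprn_gt0 ?vv_gt0 //; exact: (ler_weXn2l vv_ge1 hqp).
Qed.

Theorem lemma2 (n : nat) (hn : (0 < n)%N) : 7 / 8 <= prob_regular n.
Proof.
set e := trunc_log 2 n.
have hlog : e%:R <= log2n n.
  have := log_geS hn; rewrite -/e !INRE => /RleP.
  by rewrite /log2n RdivE.
have hl0 : 0 <= log2n n by apply: le_trans hlog; apply: ler0n.
pose p := (2 * e + 11)%N.
have hp : (0 < p)%N by rewrite /p; lia.
have hpL : p%:R <= LL n by rewrite /p /LL natrD natrM; lra.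
have hltn : (n < 2 ^ e.+1)%N := trunc_log_ltn n (isT : (1 < 2)%N).
have hb0 := bet_ge0 p.
have [hb1 K] : bet p < 1 /\ 16%:R * n%:R * bet p ^+ p <= 1 - bet p.
  case: (posnP e) => [e0 | epos].
    have p11 : p = 11%N by rewrite /p e0.
    have n1 : n = 1%N by move: hltn; rewrite e0 expn1; lia.
    rewrite p11 n1.
    have [N hb1] := N1S.
    rewrite -betE in N hb1.
    move/RleP: N; rewrite -expE Z16 RmultE RminusE R1E => N.
    split; first by apply/RltP.
    by rewrite mulr1.
  have [e' He] : exists e', e = e'.+1 by exists e.-1; rewrite prednK.
  have pE : p = (13 + 2 * e')%N by rewrite /p He; lia.
  have hB : Rle (bet p) (betS 13).
    rewrite -betE; apply/RleP; apply: bet_mono; rewrite pE; lia.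
  have hB0 : Rle 0 (bet p) by apply/RleP; exact: bet_ge0.
  have [N hb1] := N2S e' hB0 hB.
  have hn2 := hn2S (ltac:(by move: hltn; rewrite He) : (n < 2 ^ e'.+2)%N).
  move/RleP: N; rewrite -!expE Z16 Z2 !RmultE RminusE R1E => N.
  move/RleP: hn2; rewrite -expE Z2 !RmultE INRE => hn2.
  split; first by apply/RltP.
  have Ep : bet p ^+ p = bet p ^+ 13 * bet p ^+ 2 ^+ e' by rewrite -exprM -exprD -pE.
  rewrite Ep.
  apply: le_trans N.
  apply: ler_wpM2r; first by apply: mulr_ge0; apply: exprn_ge0 => //; apply: exprn_ge0.
  by apply: ler_wpM2l.
have Bnd := nbad_bound hp hb1 hpL hl0.
rewrite /prob_regular card_ffun !card_ord natrX.
have cnt_eq : (#|[set x : {ffun 'I_n -> 'I_4} | regular x]|%:R : R)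
   + \sum_(x : {ffun 'I_n -> 'I_4}) ((nat_of_bool (~~ regular x))%:R : R) = 4%:R ^+ n.
  rewrite -sum1_card natr_sum big_mkcond -big_split /=.
  rewrite (eq_bigr (fun _ => 1)); last first.
    by move=> x _; rewrite inE; case: (regular x); rewrite /= ?addr0 ?add0r.
  by rewrite sumr_const card_ffun !card_ord natrX -mulr_natr mul1r.
set A := (#|[set x : {ffun 'I_n -> 'I_4} | regular x]|%:R : R) in cnt_eq *.
set B := \sum_(x : {ffun 'I_n -> 'I_4}) _ in cnt_eq Bnd.
set Kn := 4%:R ^+ n in cnt_eq Bnd *.
have K0 : 0 < Kn by apply: exprn_gt0.
set Y := bet p ^+ p / (1 - bet p) in Bnd.
have Y1 : 16%:R * n%:R * Y <= 1.
  by rewrite /Y mulrA ler_pdivrMr ?subr_gt0 // mul1r.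
have Y0 : 0 <= Y by apply: divr_ge0; [apply: exprn_ge0 | rewrite subr_ge0 ltW].
have E : 2%:R * n%:R * Kn * Y = Kn * (2%:R * n%:R * Y) by rewrite mulrAC mulrC.
have Y2 : 2%:R * n%:R * Y <= 1 / 8 by lra.
have B8 : B <= Kn * (1 / 8).
  apply: le_trans Bnd _; rewrite E; apply: ler_wpM2l => //; exact: ltW.
rewrite ler_pdivlMr //.
lra.
Qed.
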